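(* Let $\Lambda=\{\Lambda_\omega\in B(\mathcal H,\mathcal K_\omega):\omega\in\Omega\}$ and $\Theta=\{\Theta_\omega\in B(\mathcal H,\mathcal K_\omega):\omega\in\Omega\}$ be strongly disjoint continuous $g$-frames for $\mathcal H$, and let $L_1,L_2\in B(\mathcal H)$ satisfy $L_1^*L_1+L_2^*L_2=AI$ for some $A>0$. Then $\{\Lambda_\omega L_1+\Theta_\omega L_2\in B(\mathcal H,\mathcal K_\omega):\omega\in\Omega\}$ is a continuous $g$-frame for $\mathcal H$. In particular, for $\alpha,\beta\in\mathbb C$ with $|\alpha|^2+|\beta|^2>0$, $\{\alpha\Lambda_\omega+\beta\Theta_\omega:\omega\in\Omega\}$ is a continuous $g$-frame for $\mathcal H$.
   Context: $\mathcal H$ is a complex Hilbert space, $(\Omega,\mu)$ a measure space with positive measure $\mu$, and $\{\mathcal K_\omega:\omega\in\Omega\}$ a family of complex Hilbert spaces. A map $F$ on $\Omega$ with $F(\omega)\in\mathcal K_\omega$ is strongly measurable if it is measurable as a map $\Omega\to\bigoplus_\omega\mathcal K_\omega$; $\widehat{\mathcal K}$ is the Hilbert space of strongly measurable such $F$ with $\int_\Omega\|F(\omega)\|^2d\mu<\infty$, inner product $\langle F,G\rangle=\int_\Omega\langle F(\omega),G(\omega)\rangle d\mu$. A family $\Lambda=\{\Lambda_\omega\in B(\mathcal H,\mathcal K_\omega)\}$ is a continuous $g$-frame for $\mathcal H$ if $\omega\mapsto\Lambda_\omega f$ is strongly measurable for each $f$ and there are $0<A\le B<\infty$ with $A\|f\|^2\le\int_\Omega\|\Lambda_\omega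 f\|^2d\mu(\omega)\le B\|f\|^2$ for all $f\in\mathcal H$. Its analysis operator $T_\Lambda^*:\mathcal H\to\widehat{\mathcal K}$ is $(T_\Lambda^*f)(\omega)=\Lambda_\omega f$. Two continuous $g$-frames $\Lambda,\Theta$ are strongly disjoint if $\mathrm{Range}\,T_\Lambda^*\perp\mathrm{Range}\,T_\Theta^*$ in $\widehat{\mathcal K}$. *)

(* Defs.v *)
From HB Require Import structures.
From mathcomp Require Import all_boot all_order all_algebra.
From mathcomp Require Import all_classical all_reals all_analysis.
From mathcomp Require Import complex.
Set Implicit Arguments. Unset Strict Implicit. Unset Printing Implicit Defensive.
Import Order.TTheory GRing.Theory Num.Theory.
Local Open Scope classical_set_scope.
Local Open Scope ring_scope.

Section Hilbert.
Variable R : realType.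

Record hilbert := Hilbert {
  hcarrier :> lmodType R[i];
  hinner : hcarrier -> hcarrier -> R[i];
  hinner_linear : forall (a : R[i]) (x y z : hcarrier),
      hinner (a *: x + y) z = a * hinner x z + hinner y z;
  hinner_conj : forall x y : hcarrier, hinner y x = conjc (hinner x y);
  hinner_ge0 : forall x : hcarrier, 0 <= complex.Re (hinner x x);
  hinner_definite : forall x : hcarrier, hinner x x = 0 -> x = 0;
  hcomplete : forall u : nat -> hcarrier,
      (forall e : R, 0 < e -> exists N, forall m n, (N <= m)%N -> (N <= n)%N ->
          Num.sqrt (complex.Re (hinner (u m - u n) (u m - u n))) < e) ->
      exists x : hcarrier, forall e : R, 0 < e -> exists N, forall n, (N <= n)%N ->
          Num.sqrt (complex.Re (hinner (u n - x) (u n - x))) < e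
}.

Definition inner (H : hilbert) (x y : H) : R[i] := hinner x y.
Definition hnorm (H : hilbert) (x : H) : R := Num.sqrt (complex.Re (inner x x)).

Definition bounded_op (H K : hilbert) (T : H -> K) : Prop :=
  (forall (a : R[i]) (x y : H), T (a *: x + y) = a *: T x + T y) /\
  exists M : R, forall x : H, hnorm (T x) <= M * hnorm x.

Definition is_adjoint (H K : hilbert) (T : H -> K) (S : K -> H) : Prop :=
  forall (x : H) (y : K), inner (T x) y = inner x (S y).

Section DirectSum.
Context {d : measure_display} {Omega : measurableType d}.
Variable K : Omega -> hilbert.

(* elements of ⊕_ω K_ω : dependent functions with Σ_ω ‖x ω‖² < ∞ *)
Definition dsum_elt (x : forall w, K w) : Prop :=
  (\esum_(w in [set: Omega]) ((hnorm (x w)) ^+ 2)%:E < +oo)%E.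

Definition dsum_dist2 (x y : forall w, K w) : \bar R :=
  (\esum_(w in [set: Omega]) ((hnorm (x w - y w)) ^+ 2)%:E)%E.

Definition dsum_open (U : (forall w, K w) -> Prop) : Prop :=
  forall x, dsum_elt x -> U x -> exists e : R, 0 < e /\
    forall y, dsum_elt y -> (dsum_dist2 x y < (e ^+ 2)%:E)%E -> U y.

Definition dsum_inj (w : Omega) (v : K w) : forall w', K w' :=
  fun w' => match pselect (w = w') with
            | left e => eq_rect w (fun t => (K t : Type)) v w' e
            | right _ => 0
            end.

(* F with F ω ∈ K_ω is strongly measurable: measurable as a map Ω → ⊕_ω K_ω *)
Definition strongly_measurable (F : forall w, K w) : Prop :=
  forall U, dsum_open U -> measurable [set w | U (dsum_inj (F w))].

Variable mu : {measure set Omega -> \bar R}.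

Definition hatK_inner (F G : forall w, K w) : R[i] :=
  Complex (\int[mu]_w complex.Re (inner (F w) (G w)))%R
          (\int[mu]_w complex.Im (inner (F w) (G w)))%R.

Definition cont_gframe (H : hilbert) (Lam : forall w, H -> K w) : Prop :=
  (forall w, bounded_op (Lam w)) /\
  (forall f : H, strongly_measurable (fun w => Lam w f)) /\
  exists A B : R, 0 < A /\ A <= B /\ forall f : H,
    ((A * hnorm f ^+ 2)%:E <= \int[mu]_w ((hnorm (Lam w f)) ^+ 2)%:E)%E /\
    (\int[mu]_w ((hnorm (Lam w f)) ^+ 2)%:E <= (B * hnorm f ^+ 2)%:E)%E.

(** strong disjointness: Range T_Λ^* ⟂ Range T_Θ^* in \hat K *)
Definition strongly_disjoint (H : hilbert) (Lam Theta : forall w, H -> K w) : Prop :=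
  forall f g : H, hatK_inner (fun w => Lam w f) (fun w => Theta w g) = 0.

End DirectSum.
End Hilbert.

(* Main.v *)
Require Import Defs.
From HB Require Import structures.
From mathcomp Require Import all_boot all_order all_algebra.
From mathcomp Require Import all_classical all_reals all_analysis.
From mathcomp Require Import complex.
From mathcomp Require Import ring lra measurable_realfun.
Import Order.TTheory GRing.Theory Num.Theory.

Module HF.
Local Open Scope ring_scope.

Section HilbertFacts.
Context {R : realType} {H : hilbert R}.
Implicit Types (x y z : H) (a : R[i]).

Lemma innerDl x y z : inner (x + y) z = inner x z + inner y z.
Proof. by have := hinner_linear 1 x y z; rewrite scale1r mul1r. Qed.

Lemma inner0l z : inner (0 : H) z = 0.
Proof.
have h := innerDl 0 0 z; rewrite addr0 in h.
by apply: (addrI (inner (0:H) z)); rewrite addr0 -h.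
Qed.

Lemma innerZl a x z : inner (a *: x) z = a * inner x z.
Proof.
rewrite /inner; have := hinner_linear a x 0 z; rewrite addr0 => ->.
by have := inner0l z; rewrite /inner => ->; rewrite addr0.
Qed.

Lemma innerNl x z : inner (- x) z = - inner x z.
Proof. by rewrite -scaleN1r innerZl mulN1r. Qed.

Lemma innerC x y : inner y x = conjc (inner x y).
Proof. exact: hinner_conj. Qed.

Lemma innerDr x y z : inner x (y + z) = inner x y + inner x z.
Proof. by rewrite innerC innerDl rmorphD [inner x y]innerC [inner x z]innerC. Qed.

Lemma innerZr a x y : inner x (a *: y) = conjc a * inner x y.
Proof. by rewrite innerC innerZl rmorphM [inner x y]innerC. Qed.

Lemma innerNr x z : inner x (- z) = - inner x z.
Proof. by rewrite innerC innerNl rmorphN [inner x z]innerC. Qed.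

Lemma Re_inner_ge0 x : 0 <= complex.Re (inner x x).
Proof. exact: hinner_ge0. Qed.

Lemma Im_inner x : complex.Im (inner x x) = 0.
Proof.
have := innerC x x; case: (inner x x) => a b /= [] h.
have : b + b = 0 by rewrite {1}h addNr.
by rewrite -mulr2n => /eqP; rewrite mulrn_eq0 /= => /eqP.
Qed.

Lemma hnorm_ge0 x : 0 <= hnorm x.
Proof. exact: sqrtr_ge0. Qed.

Lemma hnorm2 x : hnorm x ^+ 2 = complex.Re (inner x x).
Proof. by rewrite /hnorm sqr_sqrtr // Re_inner_ge0. Qed.

Lemma hnorm_eq0 x : hnorm x = 0 -> x = 0.
Proof.
move=> h; apply: hinner_definite.
have hr : complex.Re (inner x x) = 0.
  by rewrite -hnorm2 h expr0n.
have hi := Im_inner x.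
by move: hr hi; rewrite /inner; case: (hinner x x) => a b /= -> ->.
Qed.

Lemma hnorm_gt0 x : x <> 0 -> 0 < hnorm x.
Proof.
move=> h; rewrite lt_neqAle hnorm_ge0 andbT eq_sym; apply/eqP => /hnorm_eq0.
exact: h.
Qed.

Lemma norm2D x y : hnorm (x + y) ^+ 2 =
  hnorm x ^+ 2 + hnorm y ^+ 2 + 2 * complex.Re (inner x y).
Proof.
rewrite !hnorm2 innerDl !innerDr (innerC x y).
case: (inner x x) => a b; case: (inner y y) => c e; case: (inner x y) => f g /=.
ring.
Qed.

Lemma norm2B x y : hnorm (x - y) ^+ 2 =
  hnorm x ^+ 2 + hnorm y ^+ 2 - 2 * complex.Re (inner x y).
Proof.
rewrite norm2D innerNr -[hnorm (- y)]/(Num.sqrt (complex.Re (inner (-y) (-y)))).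
rewrite innerNl innerNr opprK -[Num.sqrt _]/(hnorm y).
by case: (inner x y) => a b /=; ring.
Qed.

Lemma cross_bound x y :
  `|2 * complex.Re (inner x y)| <= hnorm x ^+ 2 + hnorm y ^+ 2.
Proof.
have h1 := norm2D x y; have h2 := norm2B x y.
have p1 : 0 <= hnorm (x + y) ^+ 2 by exact: sqr_ge0.
have p2 : 0 <= hnorm (x - y) ^+ 2 by exact: sqr_ge0.
rewrite ler_norml; apply/andP; split; lra.
Qed.

Lemma norm2D_le x y : hnorm (x + y) ^+ 2 <= 2 * hnorm x ^+ 2 + 2 * hnorm y ^+ 2.
Proof.
have h1 := norm2D x y; have h2 := norm2B x y.
have p2 : 0 <= hnorm (x - y) ^+ 2 by exact: sqr_ge0.
lra.
Qed.

Lemma hnormD_le x y : hnorm (x + y) <= 2 * (hnorm x + hnorm y).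
Proof.
have h := norm2D_le x y.
have p1 := hnorm_ge0 x; have p2 := hnorm_ge0 y; have p3 := hnorm_ge0 (x + y).
rewrite -(ler_pXn2r (_ : 0 < 2)%N) ?nnegrE //; last by rewrite mulr_ge0 // addr_ge0.
apply: (le_trans h); nra.
Qed.

End HilbertFacts.

End HF.
Import HF.

Module MF.
Local Open Scope classical_set_scope.
Local Open Scope ring_scope.

Section Meas.
Variables (R : realType) (d : measure_display) (Omega : measurableType d).
Variable K : Omega -> hilbert R.

Lemma dsum_inj_self w (v : K w) : dsum_inj v w = v.
Proof.
rewrite /dsum_inj; case: (pselect (w = w)) => [e|n]; last by case: n.
by rewrite (Prop_irrelevance e (erefl w)).
Qed.

Lemma dsum_inj_other w w' (v : K w) : w <> w' -> dsum_inj v w' = 0.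
Proof. by move=> n; rewrite /dsum_inj; case: (pselect (w = w')). Qed.

Lemma dsum_inj0 w : dsum_inj (0 : K w) = (fun w' => 0).
Proof.
apply: functional_extensionality_dep => w'.
rewrite /dsum_inj; case: (pselect (w = w')) => // e.
by case: w' / e.
Qed.

Definition supp (F : forall w, K w) := [set w | F w <> 0].

Definition allmeas (Z : set Omega) := forall S, S `<=` Z -> measurable S.

Lemma allmeas_meas Z P : allmeas Z ->
  ((forall w, ~ Z w -> P w) \/ (forall w, ~ Z w -> ~ P w)) -> measurable P.
Proof.
move=> hZ hP.
have -> : P = (Z `&` P) `|` (~` Z `&` P).
  by rewrite -setIUl setUv setTI.
apply: measurableU; first by apply: hZ => w [].
case: hP => hP.
- have -> : ~` Z `&` P = ~` Z.
    by apply/seteqP; split => w; [case|move=> hw; split => //; exact: hP].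
  by apply: measurableC; apply: hZ.
- have -> : ~` Z `&` P = set0.
    by apply/seteqP; split => w // [hw]; exact: hP.
  exact: measurable0.
Qed.

Lemma allmeas_fun d' (T : measurableType d') Z (f : Omega -> T) (c : T) :
  allmeas Z -> (forall w, ~ Z w -> f w = c) -> measurable_fun setT f.
Proof.
move=> hZ hf _ Y mY; rewrite setTI.
apply: (@allmeas_meas Z (f @^-1` Y) hZ).
have [Yc|nYc] := pselect (Y c).
- by left => w /hf; rewrite /preimage /= => ->.
- by right => w /hf; rewrite /preimage /= => ->.
Qed.

Lemma allmeasU Z1 Z2 : allmeas Z1 -> allmeas Z2 -> allmeas (Z1 `|` Z2).
Proof.
move=> h1 h2 S hS.
have -> : S = (S `&` Z1) `|` (S `&` ~` Z1).
  by rewrite -setIUr setUv setIT.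
apply: measurableU; first by apply: h1 => w [].
apply: h2 => w [/hS [//|//]].
Qed.

Lemma sm_allmeas F : strongly_measurable F -> allmeas (supp F).
Proof.
move=> hF S hS.
pose U := fun x : forall w, K w => exists2 w, S w & x w <> 0.
have oU : dsum_open U.
  move=> x _ [w Sw xw].
  exists (hnorm (x w)); split; first exact: hnorm_gt0.
  move=> y _ hxy; exists w => // yw0.
  move: hxy; apply/negP; rewrite -leNgt.
  rewrite /dsum_dist2 (esumID [set w]); last by move=> i _; rewrite lee_fin sqr_ge0.
  rewrite setTI esum_set1 ?lee_fin ?sqr_ge0 // yw0 subr0.
  apply: leeDl; apply: esum_ge0 => i _; by rewrite lee_fin sqr_ge0.
have -> : S = [set w | U (dsum_inj (F w))].
  apply/seteqP; split => w /=.
  - by move=> Sw; exists w => //; rewrite dsum_inj_self; exact: hS.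
  - move=> [w' Sw' h]; have [->//|ne] := pselect (w = w').
    by exfalso; apply: h; rewrite dsum_inj_other.
exact: hF.
Qed.

Lemma allmeas_sm (F : forall w, K w) Z : allmeas Z -> (forall w, ~ Z w -> F w = 0) ->
  strongly_measurable F.
Proof.
move=> hZ hF U _; apply: (@allmeas_meas Z _ hZ).
have [U0|nU0] := pselect (U (fun w' => 0)).
- by left => w /hF /= ->; rewrite dsum_inj0.
- by right => w /hF /= ->; rewrite dsum_inj0.
Qed.

End Meas.
Arguments supp {R d Omega K}.
Arguments allmeas {d Omega}.
Arguments allmeasU {d Omega Z1 Z2}.
Arguments allmeas_fun {d Omega d' T Z f} c.
Arguments sm_allmeas {R d Omega K F}.
Arguments allmeas_sm {R d Omega K F Z}.

End MF.
Import MF.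

Module IF.
Local Open Scope classical_set_scope.
Local Open Scope ring_scope.

Lemma hnorm0 {R : realType} {H : hilbert R} : hnorm (0 : H) = 0.
Proof. by rewrite /hnorm inner0l sqrtr0. Qed.

Section Integ.
Variables (R : realType) (d : measure_display) (Omega : measurableType d).
Variable (mu : {measure set Omega -> \bar R}).
Variable K : Omega -> hilbert R.
Variables (A B : forall w, K w).
Hypotheses (hA : allmeas (supp A)) (hB : allmeas (supp B)).
Hypothesis fa : (\int[mu]_w ((hnorm (A w)) ^+ 2)%:E < +oo)%E.
Hypothesis fb : (\int[mu]_w ((hnorm (B w)) ^+ 2)%:E < +oo)%E.
Hypothesis hc : Rintegral mu setT (fun w => complex.Re (inner (A w) (B w))) = 0.

Lemma nsupp (F : forall w, K w) w : ~ supp F w -> F w = 0.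
Proof. by move=> h; apply: contrapT. Qed.

Let a w := (hnorm (A w)) ^+ 2.
Let b w := (hnorm (B w)) ^+ 2.
Let c w := complex.Re (inner (A w) (B w)).

Let ma : measurable_fun setT ((fun w => (a w)%:E) : Omega -> \bar R).
Proof.
apply: (allmeas_fun (T := \bar R) 0%E hA) => w /nsupp /= h.
by rewrite /a h hnorm0 expr0n.
Qed.

Let mb : measurable_fun setT ((fun w => (b w)%:E) : Omega -> \bar R).
Proof.
apply: (allmeas_fun (T := \bar R) 0%E hB) => w /nsupp /= h.
by rewrite /b h hnorm0 expr0n.
Qed.

Let mab : measurable_fun setT ((fun w => (a w + b w)%:E) : Omega -> \bar R).
Proof.
apply: (allmeas_fun (T := \bar R) 0%E (allmeasU hA hB)) => w hw.
have /nsupp h1 : ~ supp A w by move=> h; apply: hw; left.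
have /nsupp h2 : ~ supp B w by move=> h; apply: hw; right.
by rewrite /= /a /b h1 h2 hnorm0 expr0n addr0.
Qed.

Let mc : measurable_fun setT ((fun w => (c w)%:E) : Omega -> \bar R).
Proof.
apply: (allmeas_fun (T := \bar R) 0%E hA) => w /nsupp /= h.
by rewrite /c h inner0l.
Qed.

Let mcabs : measurable_fun setT ((fun w => `|(c w)%:E|%E) : Omega -> \bar R).
Proof.
apply: (allmeas_fun (T := \bar R) 0%E hA) => w /nsupp /= h.
by rewrite /c h inner0l /= normr0.
Qed.

Let ia : mu.-integrable setT (fun w => (a w)%:E).
Proof.
apply/integrableP; split => //.
rewrite (eq_integral (fun w => (a w)%:E)) //.
by move=> w _; rewrite gee0_abs // lee_fin sqr_ge0.
Qed.

Let ib : mu.-integrable setT (fun w => (b w)%:E).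
Proof.
apply/integrableP; split => //.
rewrite (eq_integral (fun w => (b w)%:E)) //.
by move=> w _; rewrite gee0_abs // lee_fin sqr_ge0.
Qed.

Let intab : (\int[mu]_w (a w + b w)%:E = \int[mu]_w (a w)%:E + \int[mu]_w (b w)%:E)%E.
Proof.
by rewrite -integralD //.
Qed.

Let ic : mu.-integrable setT (fun w => (c w)%:E).
Proof.
apply/integrableP; split => //.
apply: (le_lt_trans (y := (\int[mu]_w (a w + b w)%:E)%E)).
  apply: ge0_le_integral => //.
  move=> w _; rewrite lee_fin.
  have h := cross_bound (A w) (B w).
  rewrite normrM ger0_norm // in h.
  have := normr_ge0 (c w); rewrite /c /a /b; lra.
by rewrite intab lte_add_pinfty.
Qed.

Lemma integral_split :
  (\int[mu]_w ((hnorm (A w + B w)) ^+ 2)%:E =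
   \int[mu]_w ((hnorm (A w)) ^+ 2)%:E + \int[mu]_w ((hnorm (B w)) ^+ 2)%:E)%E.
Proof.
rewrite (eq_integral (fun w => (a w + b w)%:E + (2%:E * (c w)%:E))%E); last first.
  by move=> w _; rewrite norm2D -EFinM -EFinD.
rewrite integralD //; last exact: integrableZl.
rewrite integralZl //.
have -> : (\int[mu]_w (c w)%:E)%E = 0%E.
  rewrite -(fineK (integrable_fin_num _ ic)) //.
  by move: hc; rewrite /Rintegral => ->.
rewrite mule0 adde0 intab //.
exact: (integrableD measurableT ia ib).
Qed.

End Integ.

End IF.
Import IF.
Local Open Scope ring_scope.

Lemma bnd_abs {R : realType} {H1 H2 : hilbert R} (T : H1 -> H2) (M : R) :
  (forall x, hnorm (T x) <= M * hnorm x) -> forall x, hnorm (T x) <= `|M| * hnorm x.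
Proof.
move=> h x; apply: (le_trans (h x)); apply: ler_wpM2r; first exact: hnorm_ge0.
exact: real_ler_norm (num_real M).
Qed.

Arguments bnd_abs {R H1 H2 T M}.

Lemma lin0 {R : realType} {H1 H2 : hilbert R} (T : H1 -> H2) :
  (forall a x y, T (a *: x + y) = a *: T x + T y) -> T 0 = 0.
Proof.
move=> h; have := h 1 0 0; rewrite addr0 !scale1r => e.
by apply: (addrI (T 0)); rewrite addr0 -e.
Qed.

Lemma lin_scale {R : realType} {H1 H2 : hilbert R} (T : H1 -> H2) a x :
  (forall a x y, T (a *: x + y) = a *: T x + T y) -> T (a *: x) = a *: T x.
Proof. by move=> h; have := h a x 0; rewrite !addr0 (lin0 _ h) addr0. Qed.

Lemma ReD {R : realType} (x y : R[i]) : complex.Re (x + y) = complex.Re x + complex.Re y.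
Proof. by case: x; case: y. Qed.

Lemma part1 (R : realType) (d : measure_display) (Omega : measurableType d)
  (mu : {measure set Omega -> \bar R}) (H : hilbert R) (K : Omega -> hilbert R)
  (Lam Theta : forall w, H -> K w) :
  cont_gframe mu Lam -> cont_gframe mu Theta -> strongly_disjoint mu Lam Theta ->
  (forall (L1 L2 : H -> H) (L1s L2s : H -> H) (A : R),
      bounded_op L1 -> bounded_op L2 ->
      is_adjoint L1 L1s -> is_adjoint L2 L2s ->
      0 < A -> (forall f : H, L1s (L1 f) + L2s (L2 f) = (A%:C)%C *: f) ->
      cont_gframe mu (fun w (f : H) => Lam w (L1 f) + Theta w (L2 f))).
Proof.
move=> [bL [sL [A1 [B1 [A1p [A1B1 hL]]]]]] [bT [sT [A2 [B2 [A2p [A2B2 hT]]]]]] hD.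
move=> L1 L2 L1s L2s A [lin1 [M1 hM1]] [lin2 [M2 hM2]] adj1 adj2 Ap hsum.
split; [|split].
- move=> w; have [linL [ML hML]] := bL w; have [linT [MT hMT]] := bT w.
  split.
  + move=> a x y; rewrite lin1 lin2 linL linT scalerDr.
    by rewrite addrACA.
  + exists (2 * (`|ML| * `|M1| + `|MT| * `|M2|)) => x.
    apply: (le_trans (hnormD_le _ _)).
    have e1 : hnorm (Lam w (L1 x)) <= `|ML| * `|M1| * hnorm x.
      apply: (le_trans (bnd_abs hML _)); rewrite -mulrA.
      by apply: ler_wpM2l => //; exact: bnd_abs.
    have e2 : hnorm (Theta w (L2 x)) <= `|MT| * `|M2| * hnorm x.
      apply: (le_trans (bnd_abs hMT _)); rewrite -mulrA.
      by apply: ler_wpM2l => //; exact: bnd_abs.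
    rewrite -mulrA; apply: ler_wpM2l => //; rewrite mulrDl.
    exact: lerD.
- move=> f.
  have h1 := sm_allmeas (sL (L1 f)); have h2 := sm_allmeas (sT (L2 f)).
  apply: (allmeas_sm (allmeasU h1 h2)) => w hw.
  have /nsupp -> : ~ supp (fun w => Lam w (L1 f)) w by move=> h; apply: hw; left.
  have /nsupp -> : ~ supp (fun w => Theta w (L2 f)) w by move=> h; apply: hw; right.
  by rewrite addr0.
- pose m := Num.min A1 A2.
  have mp : 0 < m by rewrite lt_min A1p A2p.
  have m1 : m <= A1 by rewrite ge_min lexx.
  have m2 : m <= A2 by rewrite ge_min lexx orbT.
  pose Bm := B1 * M1 ^+ 2 + B2 * M2 ^+ 2.
  exists (m * A), (Num.max (m * A) Bm); split; first exact: mulr_gt0.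
  split; first by rewrite le_max lexx.
  move=> f.
  have key : hnorm (L1 f) ^+ 2 + hnorm (L2 f) ^+ 2 = A * hnorm f ^+ 2.
    rewrite !hnorm2 (adj1 f (L1 f)) (adj2 f (L2 f)).
    rewrite -ReD -innerDr hsum innerZr.
    have := Im_inner f; case: (inner f f) => r s /= ->; ring.
  have n1 : hnorm (L1 f) ^+ 2 <= M1 ^+ 2 * hnorm f ^+ 2.
    have := hM1 f; have := hnorm_ge0 (L1 f); have := hnorm_ge0 f; nra.
  have n2 : hnorm (L2 f) ^+ 2 <= M2 ^+ 2 * hnorm f ^+ 2.
    have := hM2 f; have := hnorm_ge0 (L2 f); have := hnorm_ge0 f; nra.
  have [lo1 up1] := hL (L1 f); have [lo2 up2] := hT (L2 f).
  rewrite (@integral_split R d Omega mu K (fun w => Lam w (L1 f)) (fun w => Theta w (L2 f))).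
  + split.
    * apply: le_trans (leeD lo1 lo2); rewrite -EFinD lee_fin.
      have := sqr_ge0 (hnorm (L1 f)); have := sqr_ge0 (hnorm (L2 f)).
      rewrite -mulrA -key; nra.
    * apply: le_trans (leeD up1 up2) _; rewrite -EFinD lee_fin.
      have hB1 : 0 <= B1 by apply: le_trans A1B1; exact: ltW.
      have hB2 : 0 <= B2 by apply: le_trans A2B2; exact: ltW.
      apply: (le_trans (y := Bm * hnorm f ^+ 2)).
        rewrite /Bm; have := sqr_ge0 (hnorm f); nra.
      apply: ler_wpM2r; first exact: sqr_ge0.
      by rewrite le_max lexx orbT.
  + exact: sm_allmeas (sL (L1 f)).
  + exact: sm_allmeas (sT (L2 f)).
  + by apply: (le_lt_trans up1); exact: ltry.
  + by apply: (le_lt_trans up2); exact: ltry.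
  + have := congr1 (@complex.Re R) (hD (L1 f) (L2 f)).
    by rewrite /hatK_inner /=.
Qed.

Lemma hnormZ {R : realType} {H : hilbert R} (al : R[i]) (x : H) :
  hnorm (al *: x) = Num.sqrt (complex.Re al ^+ 2 + complex.Im al ^+ 2) * hnorm x.
Proof.
rewrite /hnorm innerZl innerZr -sqrtrM; last by rewrite addr_ge0 // sqr_ge0.
have := Im_inner x; case: al => p q; case: (inner x x) => r s /= ->.
congr Num.sqrt; ring.
Qed.

Lemma scal_bounded {R : realType} {H : hilbert R} (al : R[i]) :
  bounded_op (fun x : H => al *: x).
Proof.
split.
- by move=> a x y; rewrite scalerDr !scalerA mulrC.
- exists (Num.sqrt (complex.Re al ^+ 2 + complex.Im al ^+ 2)) => x.
  by rewrite hnormZ.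
Qed.

Lemma scal_adjoint {R : realType} {H : hilbert R} (al : R[i]) :
  is_adjoint (fun x : H => al *: x) (fun x : H => conjc al *: x).
Proof. by move=> x y; rewrite innerZl innerZr conjcK. Qed.

Theorem proposition2p6 (R : realType) (d : measure_display) (Omega : measurableType d)
  (mu : {measure set Omega -> \bar R}) (H : hilbert R) (K : Omega -> hilbert R)
  (Lam Theta : forall w, H -> K w) :
  cont_gframe mu Lam -> cont_gframe mu Theta -> strongly_disjoint mu Lam Theta ->
  (forall (L1 L2 : H -> H) (L1s L2s : H -> H) (A : R),
      bounded_op L1 -> bounded_op L2 ->
      is_adjoint L1 L1s -> is_adjoint L2 L2s ->
      0 < A -> (forall f : H, L1s (L1 f) + L2s (L2 f) = (A%:C)%C *: f) ->
      cont_gframe mu (fun w (f : H) => Lam w (L1 f) + Theta w (L2 f))) /\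
  (forall alpha beta : R[i],
      0 < `|alpha| ^+ 2 + `|beta| ^+ 2 ->
      cont_gframe mu (fun w (f : H) => alpha *: Lam w f + beta *: Theta w f)).
Proof.
move=> fL fT hD; split; first exact: part1.
move=> alpha beta hpos.
have [p [q Ea]] : exists p q, alpha = (p +i* q)%C by case: (alpha) => p q; exists p, q.
have [p' [q' Eb]] : exists p q, beta = (p +i* q)%C by case: (beta) => u v; exists u, v.
pose A := complex.Re alpha ^+ 2 + complex.Im alpha ^+ 2 +
          (complex.Re beta ^+ 2 + complex.Im beta ^+ 2).
have Ap : 0 < A.
  move: hpos; rewrite -!add_Re2_Im2 /A.
  by rewrite Ea Eb ltcE /= => /andP[].
have hsum : forall f : H, conjc alpha *: (alpha *: f) + conjc beta *: (beta *: f)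
    = (A%:C)%C *: f.
  move=> f; rewrite !scalerA -scalerDl; congr (_ *: f).
  rewrite /A Ea Eb /=.
  by congr (Complex _ _); ring.
have := @part1 _ _ _ _ _ _ _ _ fL fT hD _ _ _ _ _ (scal_bounded alpha) (scal_bounded beta)
  (scal_adjoint alpha) (scal_adjoint beta) Ap hsum.
have -> : (fun w (f : H) => Lam w (alpha *: f) + Theta w (beta *: f)) =
          (fun w (f : H) => alpha *: Lam w f + beta *: Theta w f) => //.
apply: functional_extensionality_dep => w.
apply: functional_extensionality_dep => f.
have [bL _] := fL; have [bT _] := fT; have [linL _] := bL w; have [linT _] := bT w.
by rewrite (lin_scale _ _ _ linL) (lin_scale _ _ _ linT).
Qed.
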